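(* Let $f:[0,1]\to\mathbb{R}$ be bounded and measurable, let $0<a<b<1$, and assume $f(t)=c$ for all $t\in(a,b)$, for some real constant $c$. Let $n\in\mathbb{N}$ and $k\in\mathbb{N}\cup\{0\}$ with $k<n$, and assume that the interval $I=\left(\frac{na}{n-k},\, b-\frac{k}{n}\right)$ is nonempty. Then for every $x\in I$, \[ |L_{n,k}f(x)-f(x)|\leq \|f-c\|\left(e^{-(n-k)r\left(x,\frac{na}{n-k}\right)}+e^{-(n-k)r\left(x,b-\frac{k}{n}\right)}\right). \]
   Context: For $x\in[0,1]$ and $m\in\mathbb{N}\cup\{0\}$, let $S_m(x)=Y_1(x)+\cdots+Y_m(x)$ where $Y_1(x),Y_2(x),\ldots$ are independent Bernoulli random variables with $P(Y_i(x)=1)=1-P(Y_i(x)=0)=x$ (so $S_m(x)$ is binomial with parameters $m,x$; $S_0(x)=0$). Let $W_k$ be any random variable taking values in $[0,k]$, independent of the $Y_i(x)$. For bounded measurable $f:[0,1]\to\mathbb{R}$, define $L_{n,k}f(x)=\mathbb{E}\, f\!\left(\frac{S_{n-k}(x)+W_k}{n}\right)$. (For example, when $W_k$ is a sum of $k$ independent uniform $[0,1]$ variables this is the Bernstein–Kantorovich operator, and $k=0$ gives the Bernstein polynomial.) $\|f-c\|=\sup_{t\in[0,1]}|f(t)-c|$. For $x,\theta\in(0,1)$, $r(x,\theta)=\theta\log\frac{\theta}{x}+(1-\theta)\log\frac{1-\theta}{1-x}$. *)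

(* Defs.v *)
From mathcomp Require Import all_boot all_order all_algebra.
From mathcomp Require Import all_classical all_reals all_analysis.
Set Implicit Arguments. Unset Strict Implicit. Unset Printing Implicit Defensive.
Import Order.TTheory GRing.Theory Num.Theory.
Local Open Scope classical_set_scope.
Local Open Scope ring_scope.

(* L_{n,k} f x = E f((S_{n-k}(x) + W_k)/n), with S_{n-k}(x) ~ Bin(n-k,x)
   independent of W_k whose law is mu (a probability measure on R
   concentrated on [0,k]).  By independence the expectation is the
   binomial mixture of the integrals against the law of W_k. *)
Definition Lnk (R : realType) (mu : probability R R) (n k : nat)
    (f : R -> R) (x : R) : R :=
  \sum_(j < (n - k).+1)
     ('C(n - k, j))%:R * x ^+ j * (1 - x) ^+ (n - k - j)
     * Rintegral mu `[0, k%:R] (fun w => f ((j%:R + w) / n%:R)).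

Definition supnorm01 (R : realType) (f : R -> R) (c : R) : R :=
  sup [set `|f t - c| | t in `[0, 1]].

Definition rfun (R : realType) (x theta : R) : R :=
  theta * ln (theta / x) + (1 - theta) * ln ((1 - theta) / (1 - x)).

(* Main.v *)
Require Import Defs.
From mathcomp Require Import all_boot all_order all_algebra.
From mathcomp Require Import all_classical all_reals all_analysis.
From mathcomp Require Import ring lra.
Import Order.TTheory GRing.Theory Num.Theory.
Local Open Scope classical_set_scope.
Local Open Scope ring_scope.

Lemma binom_sum (R : realType) (m : nat) (u v : R) :
  \sum_(j < m.+1) 'C(m, j)%:R * u ^+ j * v ^+ (m - j) = (v + u) ^+ m.
Proof.
rewrite exprDn; apply: eq_bigr => j _; rewrite -mulr_natl; ring.
Qed.

Lemma chernoff (R : realType) (m : nat) (x th : R) (P : pred nat) :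
  0 < x < 1 -> 0 < th < 1 ->
  (forall j, P j -> 0 <= (j%:R - m%:R * th) * ln (th * (1 - x) / (x * (1 - th)))) ->
  \sum_(j < m.+1) 'C(m, j)%:R * x ^+ j * (1 - x) ^+ (m - j) * (P j)%:R
    <= expR (- (m%:R * rfun x th)).
Proof.
move=> /andP[x0 x1] /andP[t0 t1] HP.
have x1' : 0 < 1 - x by rewrite subr_gt0.
have t1' : 0 < 1 - th by rewrite subr_gt0.
set z := th * (1 - x) / (x * (1 - th)).
have z0 : 0 < z by rewrite /z divr_gt0 ?mulr_gt0.
set L := ln z.
apply: (@le_trans _ _ (\sum_(j < m.+1) 'C(m, j)%:R * x ^+ j * (1 - x) ^+ (m - j)
    * expR ((j%:R - m%:R * th) * L))).
  apply: ler_sum => j _; apply: ler_wpM2l.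
    by rewrite !(mulr_ge0, exprn_ge0, ler0n) // ltW.
  case: (boolP (P j)) => Pj /=; last exact: expR_ge0.
  have := expR_ge1Dx ((j%:R - m%:R * th) * L).
  have := HP j Pj; rewrite -/z -/L. lra.
have E : forall j : 'I_m.+1, 'C(m, j)%:R * x ^+ j * (1 - x) ^+ (m - j)
    * expR ((j%:R - m%:R * th) * L) =
    expR (- (m%:R * th * L)) * ('C(m, j)%:R * (x * z) ^+ j * (1 - x) ^+ (m - j)).
  move=> j.
  have -> : (j%:R - m%:R * th) * L = - (m%:R * th * L) + j%:R * L by ring.
  rewrite expRD expRM_natl /L lnK ?posrE //. rewrite [(x * _) ^+ _]exprMn. ring.
rewrite (eq_bigr _ (fun j _ => E j)) -mulr_sumr binom_sum.
set q := (1 - x) / (1 - th).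
have q0 : 0 < q by rewrite divr_gt0.
have -> : 1 - x + x * z = q.
  rewrite /z /q; field.
  by apply/andP; split; rewrite gt_eqF.
rewrite -(lnK q0) -expRM_natl -expRD.
rewrite ler_expR.
rewrite /L /z /q /rfun.
rewrite !ln_div ?posrE ?mulr_gt0 // !lnM ?posrE //.
rewrite le_eqVlt; apply/orP; left; apply/eqP.
ring.
Qed.

Theorem theorem2 (R : realType) (f : R -> R) (a b c : R) (n k : nat)
    (mu : probability R R) :
  measurable_fun (`[0, 1] : set R) f ->
  (exists M : R, forall t, t \in `[0, 1] -> `|f t| <= M) ->
  0 < a -> a < b -> b < 1 ->
  (forall t, a < t < b -> f t = c) ->
  (0 < n)%N -> (k < n)%N ->
  mu `[0, k%:R]%classic = 1%E ->
  n%:R * a / (n - k)%:R < b - k%:R / n%:R ->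
  forall x, n%:R * a / (n - k)%:R < x < b - k%:R / n%:R ->
  `|Lnk mu n k f x - f x| <=
    supnorm01 f c *
    (expR (- ((n - k)%:R * rfun x (n%:R * a / (n - k)%:R)))
     + expR (- ((n - k)%:R * rfun x (b - k%:R / n%:R)))).
Proof.
move=> fm [M HM] a0 ab b1 fc n0 kn muk hI x /andP[xl xr].
rewrite /Lnk.
set m := (n - k)%N.
have m0 : (0 < m)%N by rewrite subn_gt0.
have nR : 0 < n%:R :> R by rewrite ltr0n.
have mR : 0 < m%:R :> R by rewrite ltr0n.
have kR : 0 <= k%:R :> R by rewrite ler0n.
have mE : m%:R = n%:R - k%:R :> R by rewrite natrB // ltnW.
set th1 := n%:R * a / m%:R.
set th2 := b - k%:R / n%:R.
have {}xl : th1 < x by exact: xl.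
have {}xr : x < th2 by exact: xr.
have kn0 : 0 <= k%:R / n%:R :> R by rewrite divr_ge0 // ltW.
have th1a : a <= th1.
  rewrite /th1 ler_pdivlMr // mE; have h := mulr_ge0 (ltW a0) kR; nra.
have th1p : 0 < th1 by lra.
have th2b : th2 <= b by rewrite /th2; lra.
have x0 : 0 < x by lra.
have x1 : x < 1 by lra.
have fxc : f x = c by apply: fc; apply/andP; split; lra.
rewrite fxc.
set S := supnorm01 f c.
have HS : forall t, 0 <= t <= 1 -> `|f t - c| <= S.
  move=> t t01; apply: ub_le_sup; last by exists t => //=; rewrite /= in_itv /=.
  exists (M + `|c|) => y [u u01 <-].
  by apply: (le_trans (ler_normB _ _)); rewrite lerD2r; apply: HM.
have S0 : 0 <= S.
  apply: (le_trans (normr_ge0 (f 0 - c))); apply: HS; by rewrite lexx ler01.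
have mD : measurable (`[0, k%:R]%classic : set R) := measurable_itv _.
have Icst : forall r, \int[mu]_(w in `[0, k%:R]) r = r.
  have muk1 : fine (mu `[0, k%:R]%classic) = 1 by rewrite muk.
  move=> r; rewrite Rintegral_cst // -[RHS]mulr1; congr (_ * _); exact: muk1.
have inD : forall (j : 'I_m.+1) (w : R), `[0, k%:R]%classic w -> 0 <= (j%:R + w) / n%:R <= 1.
  move=> j w; rewrite /= in_itv /= => /andP[w0 wk].
  have jm : j%:R <= m%:R :> R by rewrite ler_nat -ltnS ltn_ord.
  have j0 : 0 <= j%:R :> R := ler0n _ _.
  apply/andP; split; first by rewrite divr_ge0 //; lra.
  by rewrite ler_pdivrMr // mul1r; lra.
have gm : forall j : 'I_m.+1,
    measurable_fun (`[0, k%:R]%classic : set R) (fun w => f ((j%:R + w) / n%:R)).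
  move=> j.
  have -> : (fun w => f ((j%:R + w) / n%:R)) = f \o (fun w => (j%:R + w) / n%:R) by [].
  apply: (measurable_comp (measurable_itv _) _ fm).
    by move=> _ [w wD <-]; rewrite /= in_itv /=; exact: inD.
  have -> : (fun w : R => (j%:R + w) / n%:R) = ( *%R^~ n%:R^-1) \o (cst j%:R \+ id) by [].
  apply: (measurable_comp measurableT (subsetT _)).
    exact: measurable_realfun.mulrr_measurable.
  apply: measurable_realfun.measurable_funD; first exact: measurable_cst.
  exact: measurable_id.
have gi : forall j : 'I_m.+1,
    mu.-integrable (`[0, k%:R]%classic : set R) (EFin \o (fun w => f ((j%:R + w) / n%:R))).
  move=> j; apply: measurable_bounded_integrable => //.
    pose D := (`[0, k%:R]%classic : set R).
    have muk2 : (mu D < +oo)%E by rewrite /D muk ltry.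
    exact: muk2.
  exists M; split; first exact: num_real.
  move=> M' HM' w wD /=; apply: (le_trans _ (ltW HM')); apply: HM.
  by rewrite in_itv /=; exact: inD.
have Ib : forall j : 'I_m.+1,
    `|\int[mu]_(w in `[0, k%:R]) f ((j%:R + w) / n%:R) - c| <= S.
  move=> j; rewrite ler_distl; apply/andP; split.
    rewrite -[X in X <= _]Icst; apply: le_Rintegral => //.
      exact: finite_measure_integrable_cst.
    move=> w wD; have := HS _ (inD j w wD); rewrite ler_distl => /andP[] //.
  rewrite -[X in _ <= X]Icst; apply: le_Rintegral => //.
    exact: finite_measure_integrable_cst.
  move=> w wD; have := HS _ (inD j w wD); rewrite ler_distl => /andP[] //.
have Ig : forall j : 'I_m.+1, n%:R * a < j%:R -> j%:R < n%:R * b - k%:R ->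
    \int[mu]_(w in `[0, k%:R]) f ((j%:R + w) / n%:R) = c.
  move=> j h1 h2; rewrite -[RHS]Icst; apply: eq_Rintegral => w.
  rewrite inE /= in_itv /= => /andP[w0 wk]; apply: fc; apply/andP; split.
    by rewrite ltr_pdivlMr //; lra.
  by rewrite ltr_pdivrMr //; lra.
have sum1 : \sum_(j < m.+1) 'C(m, j)%:R * x ^+ j * (1 - x) ^+ (m - j) = 1.
  by rewrite binom_sum subrK expr1n.
have pge : forall j : 'I_m.+1, 0 <= 'C(m, j)%:R * x ^+ j * (1 - x) ^+ (m - j).
  by move=> j; rewrite !(mulr_ge0, exprn_ge0, ler0n) // ?subr_ge0 ltW.
rewrite -(mulr1 c) -[X in c * X]sum1 mulr_sumr -sumrB.
apply: (le_trans (ler_norm_sum _ _ _)).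
pose P1 := fun j : nat => (j%:R <= n%:R * a :> R).
pose P2 := fun j : nat => (n%:R * b - k%:R <= j%:R :> R).
apply: (@le_trans _ _ (\sum_(j < m.+1)
   ('C(m, j)%:R * x ^+ j * (1 - x) ^+ (m - j) * ((P1 j)%:R : R) * S +
    'C(m, j)%:R * x ^+ j * (1 - x) ^+ (m - j) * ((P2 j)%:R : R) * S))).
  apply: ler_sum => j _; rewrite [c * _]mulrC -mulrBr normrM ger0_norm //.
  have t1 := mulr_ge0 (mulr_ge0 (pge j) (ler0n R (P1 j))) S0.
  have t2 := mulr_ge0 (mulr_ge0 (pge j) (ler0n R (P2 j))) S0.
  have t3 := ler_wpM2l (pge j) (Ib j).
  rewrite /P1 /P2 in t1 t2 *.
  case: (boolP (j%:R <= n%:R * a)) => h1.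
    by rewrite /= mulr1; apply: (le_trans t3); rewrite lerDl.
  case: (boolP (n%:R * b - k%:R <= j%:R)) => h2.
    by rewrite /= mulr1 mulr0 mul0r add0r.
  rewrite Ig ?subrr ?normr0 ?mulr0 /= ?mulr0 ?mul0r ?addr0 //.
    by rewrite ltNge.
  by rewrite ltNge.
rewrite big_split /= -!mulr_suml -mulrDl mulrC; apply: ler_wpM2l => //.
apply: lerD; apply: chernoff.
- by apply/andP; split.
- by apply/andP; split; lra.
- move=> j h; apply: mulr_le0.
    have h' : j%:R <= n%:R * a :> R := h.
    have : m%:R * th1 = n%:R * a by rewrite /th1 mulrC divfK // gt_eqF.
    lra.
  apply: ln_le0; rewrite ler_pdivrMr ?mul1r; first nra.
  by rewrite mulr_gt0 // subr_gt0; lra.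
- by apply/andP; split.
- by apply/andP; split; lra.
- move=> j h; apply: mulr_ge0.
    have : m%:R * th2 = n%:R * b - k%:R - k%:R * th2.
      by rewrite mE /th2; field; rewrite gt_eqF.
    have : 0 <= k%:R * th2 by rewrite mulr_ge0 //; lra.
    have h' : n%:R * b - k%:R <= j%:R :> R := h.
    lra.
  apply: ln_ge0; rewrite ler_pdivlMr ?mul1r; first nra.
  by rewrite mulr_gt0 // subr_gt0; lra.
Qed.
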